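(* For a non-negative integer $n$ and real $x>0$ small, define $$A_n(x)=2\ln(n!\,x)+\ln|\Gamma(-n-x)|+\ln|\Gamma(-n+x)|-x^2\sum_{k=1}^n\frac1{k^2}.$$ Then for every non-negative integer $n$, $$\lim_{x\to0^+}\frac{1}{x^2}\ln\!\left(\frac{A_n(x)}{A_{n+1}(x)}\right)=-\frac{1}{2(n+1)^4\zeta(2)}.$$
   Context: $\Gamma$ is Euler's Gamma function on the real line and $\zeta$ is the Riemann zeta function. *)

(* Defs.v *)
From Stdlib Require Import Reals.
From Coquelicot Require Import Coquelicot.
Open Scope R_scope.

Definition Gamma_pos (x : R) : R :=
  RInt_gen (fun t => Rpower t (x - 1) * exp (- t)) (at_right 0) (Rbar_locally p_infty).

(* Number of unit shifts N so that x + N > 0. *)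
Definition Gamma_shift (x : R) : nat := Z.to_nat (up (- x)).

(* Euler's Gamma function on the real line: the integral for x > 0, extended to
   x <= 0 (non-integer) by the functional equation
   Gamma x = Gamma (x + N) / (x (x+1) ... (x+N-1)). Values at poles are junk. *)
Definition Gamma (x : R) : R :=
  if Rlt_dec 0 x then Gamma_pos x
  else let N := Gamma_shift x in
       Gamma_pos (x + INR N) / prod_f_R0 (fun k => x + INR k) (N - 1).

Definition zeta2 : R := Series (fun k => / (INR k + 1) ^ 2).

Definition A (n : nat) (x : R) : R :=
  2 * ln (INR (Factorial.fact n) * x) + ln (Rabs (Gamma (- INR n - x)))
  + ln (Rabs (Gamma (- INR n + x)))
  - x ^ 2 * sum_n_m (fun k => / INR k ^ 2) 1 n.

(* Main.v *)
Require Import Defs.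
From Stdlib Require Import Reals.
From Stdlib Require Import Lra Lia Psatz Classical ZArith.
From Coquelicot Require Import Coquelicot.
Open Scope R_scope.

Definition gf (s t : R) := Rpower t (s - 1) * exp (- t).

Lemma gf_pos s t : 0 < gf s t.
Proof. unfold gf, Rpower. apply Rmult_lt_0_compat; apply exp_pos. Qed.

Lemma gf_cont s t : 0 < t -> continuous (gf s) t.
Proof.
intros Ht. apply (ex_derive_continuous (V := R_NormedModule) (gf s) t). unfold gf, Rpower. auto_derive. lra.
Qed.

Lemma gf_ex s a b : 0 < a -> 0 < b -> ex_RInt (gf s) a b.
Proof.
intros Ha Hb. apply (ex_RInt_continuous (V := R_CompleteNormedModule)). intros z Hz. apply gf_cont.
assert (0 < Rmin a b) by (apply Rmin_glb_lt; lra). lra.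
Qed.

Lemma pow_is_derive s x : 0 < s -> 0 < x ->
  is_derive (fun t => Rpower t s / s) x (Rpower x (s - 1)).
Proof.
intros Hs Hx. unfold Rpower. auto_derive; [repeat split; lra | ].
replace ((s-1) * ln x) with (s * ln x + - ln x) by ring.
rewrite exp_plus, exp_Ropp, exp_ln by lra. field. lra.
Qed.

Lemma Rpow_cont s t : 0 < t -> continuous (fun t => Rpower t s) t.
Proof.
intros Ht. apply (ex_derive_continuous (V := R_NormedModule)).
unfold Rpower. auto_derive. lra.
Qed.

Lemma int_pow s a : 0 < s -> 0 < a -> a <= 1 ->
  is_RInt (fun t => Rpower t (s-1)) a 1 ((1 - Rpower a s)/s).
Proof.
intros Hs Ha Ha1.
assert (H := is_RInt_derive (V := R_CompleteNormedModule) (fun t => Rpower t s / s)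
   (fun t => Rpower t (s-1)) a 1).
replace ((1 - Rpower a s)/s) with (minus (Rpower 1 s / s) (Rpower a s / s)).
2:{ unfold Rpower at 1. rewrite ln_1, Rmult_0_r, exp_0. unfold minus, plus, opp; simpl. field. lra. }
apply H; intros x Hx; rewrite Rmin_left in Hx by lra; rewrite Rmax_right in Hx by lra.
- apply pow_is_derive; lra.
- apply Rpow_cont; lra.
Qed.

Lemma exp_pow_n x n : exp x ^ n = exp (INR n * x).
Proof.
induction n. simpl. rewrite Rmult_0_l, exp_0; auto.
change (exp x ^ S n) with (exp x * exp x ^ n).
rewrite IHn, <- exp_plus. f_equal. rewrite S_INR. ring.
Qed.

Lemma tail_bound s : 0 < s -> exists K, 0 < K /\ forall t, 1 <= t -> gf s t <= K / t ^ 2.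
Proof.
intros Hs. destruct (INR_unbounded (s+1)) as [m Hm].
assert (Hm0 : 0 < INR m) by lra.
exists (INR m ^ m). split. apply pow_lt; lra.
intros t Ht.
assert (H1 : Rpower t (s+1) <= INR m ^ m * exp t).
{ apply Rle_trans with (Rpower t (INR m)). apply Rle_Rpower; lra.
  rewrite Rpower_pow by lra.
  replace (t ^ m) with (INR m ^ m * (t / INR m) ^ m).
  2:{ rewrite <- Rpow_mult_distr. f_equal. field. lra. }
  apply Rmult_le_compat_l. apply pow_le; lra.
  replace (exp t) with (exp (t / INR m) ^ m).
  2:{ rewrite exp_pow_n. f_equal. field. lra. }
  apply pow_incr. split. apply Rdiv_le_0_compat; lra.
  generalize (exp_ineq1_le (t / INR m)). lra. }
assert (H2 : gf s t = Rpower t (s+1) * exp (-t) / t ^ 2).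
{ unfold gf. replace (s+1) with ((s-1) + INR 2) by (simpl; ring).
  rewrite Rpower_plus, Rpower_pow by lra. field. lra. }
rewrite H2. unfold Rdiv. apply Rmult_le_compat_r.
apply Rlt_le, Rinv_0_lt_compat, pow_lt; lra.
apply Rle_trans with (INR m ^ m * exp t * exp (-t)).
apply Rmult_le_compat_r. apply Rlt_le, exp_pos. auto.
rewrite Rmult_assoc, <- exp_plus, Rplus_opp_r, exp_0. lra.
Qed.

Lemma int_inv2 K b : 1 <= b -> is_RInt (fun t => K / t ^ 2) 1 b (K - K / b).
Proof.
intros Hb.
assert (H := is_RInt_derive (V := R_CompleteNormedModule) (fun t => - K / t)
   (fun t => K / t ^ 2) 1 b).
replace (K - K / b) with (minus (- K / b) (- K / 1)).
2:{ unfold minus, plus, opp; simpl. field. lra. }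
apply H; intros x Hx; rewrite Rmin_left in Hx by lra; rewrite Rmax_right in Hx by lra.
- auto_derive; repeat split; try lra; try (field; lra).
- apply (ex_derive_continuous (V := R_NormedModule)). auto_derive. nra.
Qed.

Lemma RInt_mono s a a' b' b : 0 < a -> a <= a' -> a' <= b' -> b' <= b ->
  RInt (gf s) a' b' <= RInt (gf s) a b.
Proof.
intros Ha H1 H2 H3.
rewrite <- (RInt_Chasles (V := R_CompleteNormedModule) (gf s) a a' b) by (apply gf_ex; lra).
rewrite <- (RInt_Chasles (V := R_CompleteNormedModule) (gf s) a' b' b) by (apply gf_ex; lra).
unfold plus; simpl.
assert (0 <= RInt (gf s) a a'). apply RInt_ge_0; auto. apply gf_ex; lra. intros; apply Rlt_le, gf_pos.
assert (0 <= RInt (gf s) b' b). apply RInt_ge_0; auto. apply gf_ex; lra. intros; apply Rlt_le, gf_pos.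
lra.
Qed.

Lemma RInt_bound s : 0 < s -> exists M, forall a b, 0 < a < 1 -> 1 < b -> RInt (gf s) a b <= M.
Proof.
intros Hs. destruct (tail_bound s Hs) as [K [HK HKb]].
exists (1 / s + K). intros a b Ha Hb.
rewrite <- (RInt_Chasles (V := R_CompleteNormedModule) (gf s) a 1 b) by (apply gf_ex; lra).
unfold plus; simpl.
assert (RInt (gf s) a 1 <= (1 - Rpower a s)/s).
{ apply is_RInt_le with (gf s) (fun t => Rpower t (s-1)) a 1; try lra.
  apply (RInt_correct (V := R_CompleteNormedModule)). apply gf_ex; lra.
  apply int_pow; lra.
  intros x Hx. unfold gf. rewrite <- (Rmult_1_r (Rpower x (s-1))) at 2.
  apply Rmult_le_compat_l. unfold Rpower; apply Rlt_le, exp_pos.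
  rewrite <- exp_0. apply Rlt_le, exp_increasing. lra. }
assert (RInt (gf s) 1 b <= K - K / b).
{ apply is_RInt_le with (gf s) (fun t => K / t ^ 2) 1 b; try lra.
  apply (RInt_correct (V := R_CompleteNormedModule)). apply gf_ex; lra.
  apply int_inv2; lra.
  intros x Hx. apply HKb. lra. }
assert (0 < Rpower a s) by (unfold Rpower; apply exp_pos).
assert (0 < K / b) by (apply Rdiv_lt_0_compat; lra).
assert ((1 - Rpower a s) / s <= 1 / s).
{ unfold Rdiv. apply Rmult_le_compat_r. apply Rlt_le, Rinv_0_lt_compat; lra. lra. }
lra.
Qed.

Lemma Gamma_spec s : 0 < s ->
  is_RInt_gen (gf s) (at_right 0) (Rbar_locally p_infty) (Gamma_pos s) /\ 0 < Gamma_pos s.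
Proof.
intros Hs.
set (E := fun y => exists a b, 0 < a < 1 /\ 1 < b /\ y = RInt (gf s) a b).
assert (HB : bound E).
{ destruct (RInt_bound s Hs) as [M HM]. exists M. intros y [a [b [Ha [Hb ->]]]]. apply HM; auto. }
assert (HE : exists y, E y).
{ exists (RInt (gf s) (1/2) 2). exists (1/2), 2. repeat split; lra. }
destruct (completeness E HB HE) as [l [Hl1 Hl2]].
assert (Hpos : 0 < l).
{ apply Rlt_le_trans with (RInt (gf s) (1/2) 2).
  apply RInt_gt_0. lra. intros; apply gf_pos. intros; apply gf_cont; lra.
  apply Hl1. exists (1/2), 2. repeat split; lra. }
assert (Hlim : is_RInt_gen (gf s) (at_right 0) (Rbar_locally p_infty) l).
{ unfold is_RInt_gen.
  apply filterlimi_lim_ext_loc with (f := fun ab => RInt (gf s) (fst ab) (snd ab)).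
  - apply Filter_prod with (fun a => 0 < a) (fun b => 1 < b).
    + exists (mkposreal 1 Rlt_0_1). intros y _ Hy. exact Hy.
    + exists 1. intros x Hx; exact Hx.
    + intros a b Ha Hb. simpl. apply (RInt_correct (V := R_CompleteNormedModule)). apply gf_ex; lra.
  - apply filterlim_locally. intros eps.
    assert (Hex : exists a0 b0, 0 < a0 < 1 /\ 1 < b0 /\ l - eps < RInt (gf s) a0 b0).
    { apply NNPP. intros Hn. assert (Hc : l <= l - eps).
      { apply Hl2. intros y [a [b [Ha [Hb Hy]]]]. subst y.
        apply Rnot_lt_le. intros Hc. apply Hn. exists a, b. auto. }
      destruct eps as [e He]; simpl in *; lra. }
    destruct Hex as [a0 [b0 [Ha0 [Hb0 Hlt]]]].
    apply Filter_prod with (fun a => 0 < a < a0) (fun b => b0 < b).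
    + exists (mkposreal a0 (proj1 Ha0)). intros y Hy Hy0. split; [exact Hy0|].
      change (Rabs (y - 0) < a0) in Hy.
      apply Rabs_lt_between' in Hy. lra.
    + exists b0. intros x Hx; exact Hx.
    + intros a b Ha Hb. simpl.
      assert (H1 : RInt (gf s) a b <= l). { apply Hl1. exists a, b. repeat split; lra. }
      assert (H2 : RInt (gf s) a0 b0 <= RInt (gf s) a b). { apply RInt_mono; lra. }
      change (Rabs (RInt (gf s) a b - l) < eps). apply Rabs_def1; lra. }
assert (Heq : Gamma_pos s = l).
{ unfold Gamma_pos. change (fun t => Rpower t (s - 1) * exp (- t)) with (gf s).
  exact (is_RInt_gen_unique (V:=R_CompleteNormedModule) (Fa := at_right 0) (Fb := Rbar_locally p_infty) (gf s) l Hlim). }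
rewrite Heq. split; assumption.
Qed.

Lemma at_right0_lt a : 0 < a -> at_right 0 (fun x => 0 < x < a).
Proof.
intros Ha. exists (mkposreal a Ha). intros y Hy Hy0. split; [exact Hy0|].
change (Rabs (y - 0) < a) in Hy. apply Rabs_lt_between' in Hy. lra.
Qed.

Lemma Gamma1 : Gamma_pos 1 = 1.
Proof.
assert (Hlim : is_RInt_gen (gf 1) (at_right 0) (Rbar_locally p_infty) 1).
{ unfold is_RInt_gen.
  apply filterlimi_lim_ext_loc with (f := fun ab => exp (- fst ab) - exp (- snd ab)).
  - apply Filter_prod with (fun a => 0 < a) (fun b => 1 < b).
    + exists (mkposreal 1 Rlt_0_1). intros y _ Hy. exact Hy.
    + exists 1. intros x Hx; exact Hx.
    + intros a b Ha Hb. simpl.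
      assert (H := is_RInt_derive (V := R_CompleteNormedModule) (fun t => - exp (- t))
         (gf 1) a b).
      replace (exp (-a) - exp (-b)) with (minus (- exp (-b)) (- exp (-a))).
      2:{ unfold minus, plus, opp; simpl. ring. }
      apply H; intros x Hx.
      * unfold gf, Rpower. auto_derive. auto. rewrite Rminus_diag, Rmult_0_l, exp_0. ring.
      * apply gf_cont. assert (0 < Rmin a b) by (apply Rmin_glb_lt; lra). lra.
  - apply filterlim_locally. intros [eps Heps]. simpl.
    apply Filter_prod with (fun a => 0 < a < eps / 2) (fun b => 2 / eps < b).
    + apply at_right0_lt. lra.
    + exists (2 / eps). intros x Hx; exact Hx.
    + intros a b Ha Hb. simpl. change (Rabs (exp (- a) - exp (- b) - 1) < eps).
      assert (H1 := exp_ineq1_le (-a)).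
      assert (H2 : exp (-a) < 1). { rewrite <- exp_0. apply exp_increasing. lra. }
      assert (H3 := exp_pos (-b)).
      assert (H4 : exp (-b) * (1 + b) <= 1).
      { assert (H5 := exp_ineq1_le b). replace 1 with (exp (-b) * exp b) at 2.
        apply Rmult_le_compat_l; lra. rewrite <- exp_plus, Rplus_opp_l, exp_0; auto. }
      assert (0 < 2 / eps) by (apply Rdiv_lt_0_compat; lra).
      assert (H6 : exp (-b) < eps / 2).
      { assert (b * (eps/2) > 1). { apply Rmult_lt_reg_r with (2/eps). auto.
          replace (b * (eps / 2) * (2 / eps)) with b by (field; lra). lra. }
        nra. }
      apply Rabs_def1; lra. }
unfold Gamma_pos. change (fun t => Rpower t (1 - 1) * exp (- t)) with (gf 1).
exact (is_RInt_gen_unique (V:=R_CompleteNormedModule) (Fa := at_right 0) (Fb := Rbar_locally p_infty) (gf 1) 1 Hlim).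
Qed.

Lemma Gamma_succ s : 0 < s -> Gamma_pos (s + 1) = s * Gamma_pos s.
Proof.
intros Hs.
set (h := fun t => Rpower t s * exp (- t)).
set (dh := fun t => s * gf s t - gf (s + 1) t).
assert (Hd : forall t, 0 < t -> is_derive h t (dh t)).
{ intros t Ht. unfold h, dh, gf, Rpower. auto_derive. auto.
  replace ((s + 1 - 1) * ln t) with (s * ln t) by ring.
  replace ((s-1) * ln t) with (s * ln t + - ln t) by ring.
  rewrite exp_plus, (exp_Ropp (ln t)), exp_ln by lra. field. lra. }
assert (Hdc : forall t, 0 < t -> continuous dh t).
{ intros t Ht. apply (ex_derive_continuous (V := R_NormedModule)). unfold dh, gf, Rpower.
  auto_derive. repeat split; lra. }
destruct (tail_bound (s+1)) as [K [HK HKb]]; [lra|].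
assert (Hint : is_RInt_gen dh (at_right 0) (Rbar_locally p_infty) 0).
{ unfold is_RInt_gen.
  apply filterlimi_lim_ext_loc with (f := fun ab => h (snd ab) - h (fst ab)).
  - apply Filter_prod with (fun a => 0 < a) (fun b => 1 < b).
    + exists (mkposreal 1 Rlt_0_1). intros y _ Hy. exact Hy.
    + exists 1. intros x Hx; exact Hx.
    + intros a b Ha Hb. simpl.
      assert (H := is_RInt_derive (V := R_CompleteNormedModule) h dh a b).
      change (h b - h a) with (minus (h b) (h a)).
      assert (0 < Rmin a b) by (apply Rmin_glb_lt; lra).
      apply H; intros x Hx. apply Hd; lra. apply Hdc; lra.
  - apply filterlim_locally. intros [eps Heps]. simpl.
    set (d := Rpower (eps / 2) (/ s)).
    assert (Hd0 : 0 < d) by (unfold d, Rpower; apply exp_pos).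
    apply Filter_prod with (fun a => 0 < a < d) (fun b => Rmax 1 (2 * K / eps) < b).
    + apply at_right0_lt. lra.
    + exists (Rmax 1 (2 * K / eps)). intros x Hx; exact Hx.
    + intros a b Ha Hb. simpl. change (Rabs (h b - h a - 0) < eps).
      assert (Hb1 : 1 < b) by (generalize (Rmax_l 1 (2*K/eps)); lra).
      assert (Hb2 : 2 * K / eps < b) by (generalize (Rmax_r 1 (2*K/eps)); lra).
      assert (Ha1 : 0 < h a) by (unfold h, Rpower; apply Rmult_lt_0_compat; apply exp_pos).
      assert (Hb3 : 0 < h b) by (unfold h, Rpower; apply Rmult_lt_0_compat; apply exp_pos).
      assert (Ha2 : h a < eps / 2).
      { apply Rle_lt_trans with (Rpower a s).
        unfold h. rewrite <- (Rmult_1_r (Rpower a s)) at 2. apply Rmult_le_compat_l.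
        unfold Rpower; apply Rlt_le, exp_pos. rewrite <- exp_0. apply Rlt_le, exp_increasing. lra.
        replace (eps / 2) with (Rpower d s).
        apply Rlt_Rpower_l; lra.
        unfold d. rewrite Rpower_mult, Rinv_l, Rpower_1 by lra. auto. }
      assert (Hb4 : h b < eps / 2).
      { assert (Hhb : h b = gf (s+1) b). { unfold h, gf. f_equal. f_equal. ring. }
        rewrite Hhb. apply Rle_lt_trans with (K / b ^ 2). apply HKb. lra.
        apply Rle_lt_trans with (K / b).
        unfold Rdiv. apply Rmult_le_compat_l. lra. apply Rinv_le_contravar. lra. nra.
        apply Rmult_lt_reg_r with (2 * b / eps). apply Rdiv_lt_0_compat; lra.
        replace (K / b * (2 * b / eps)) with (2 * K / eps) by (field; lra).
        replace (eps / 2 * (2 * b / eps)) with b by (field; lra). lra. }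
      apply Rabs_def1; lra. }
destruct (Gamma_spec s Hs) as [Hg _].
assert (H2 := is_RInt_gen_minus (Fa := at_right 0) (Fb := Rbar_locally p_infty)
   (fun t => scal s (gf s t)) dh _ _ (is_RInt_gen_scal _ s _ Hg) Hint).
assert (H3 : is_RInt_gen (gf (s+1)) (at_right 0) (Rbar_locally p_infty) (s * Gamma_pos s)).
{ replace (s * Gamma_pos s) with (minus (scal s (Gamma_pos s)) 0).
  2:{ unfold minus, plus, opp, scal; simpl. unfold mult; simpl. ring. }
  eapply is_RInt_gen_ext; [| exact H2].
  apply Filter_prod with (fun _ => True) (fun _ => True); try apply filter_true.
  intros a b _ _ x _. unfold dh, minus, plus, opp, scal; simpl. unfold mult; simpl. ring. }
unfold Gamma_pos at 1. change (fun t => Rpower t (s + 1 - 1) * exp (- t)) with (gf (s+1)).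
exact (is_RInt_gen_unique (V:=R_CompleteNormedModule) (Fa := at_right 0) (Fb := Rbar_locally p_infty) (gf (s+1)) _ H3).
Qed.

Lemma exp_convex l u v : 0 <= l <= 1 ->
  exp (l * u + (1 - l) * v) <= l * exp u + (1 - l) * exp v.
Proof.
intros Hl. set (c := l * u + (1 - l) * v).
assert (Hu : exp c * (1 + (u - c)) <= exp u).
{ replace (exp u) with (exp c * exp (u - c)) by (rewrite <- exp_plus; f_equal; ring).
  apply Rmult_le_compat_l. apply Rlt_le, exp_pos. apply exp_ineq1_le. }
assert (Hv : exp c * (1 + (v - c)) <= exp v).
{ replace (exp v) with (exp c * exp (v - c)) by (rewrite <- exp_plus; f_equal; ring).
  apply Rmult_le_compat_l. apply Rlt_le, exp_pos. apply exp_ineq1_le. }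
assert (E : exp c = l * (exp c * (1 + (u - c))) + (1 - l) * (exp c * (1 + (v - c)))).
{ unfold c. ring. }
rewrite E at 1. nra.
Qed.

Lemma Holder x y l : 0 < x -> 0 < y -> 0 < l < 1 ->
  ln (Gamma_pos (l * x + (1 - l) * y)) <= l * ln (Gamma_pos x) + (1 - l) * ln (Gamma_pos y).
Proof.
intros Hx Hy Hl.
set (s := l * x + (1 - l) * y).
assert (Hs : 0 < s) by (unfold s; nra).
destruct (Gamma_spec x Hx) as [Gx Px].
destruct (Gamma_spec y Hy) as [Gy Py].
destruct (Gamma_spec s Hs) as [Gs Ps].
set (p := Gamma_pos x) in *. set (q := Gamma_pos y) in *.
set (C := exp (l * ln p + (1 - l) * ln q)).
assert (Hpt : forall t, 0 < t -> gf s t <= C * (l / p * gf x t + (1 - l) / q * gf y t)).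
{ intros t Ht. unfold gf, Rpower, C.
  rewrite <- !exp_plus.
  set (u := (x - 1) * ln t + - t - ln p).
  set (v := (y - 1) * ln t + - t - ln q).
  replace ((s - 1) * ln t + - t) with ((l * ln p + (1 - l) * ln q) + (l * u + (1 - l) * v))
    by (unfold u, v, s; ring).
  rewrite exp_plus. apply Rmult_le_compat_l. apply Rlt_le, exp_pos.
  assert (Eu : exp u = exp ((x - 1) * ln t + - t) / p).
  { unfold u. replace ((x - 1) * ln t + - t - ln p) with (((x - 1) * ln t + - t) + - ln p) by ring.
    rewrite exp_plus, (exp_Ropp (ln p)), exp_ln by lra. field; lra. }
  assert (Ev : exp v = exp ((y - 1) * ln t + - t) / q).
  { unfold v. replace ((y - 1) * ln t + - t - ln q) with (((y - 1) * ln t + - t) + - ln q) by ring.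
    rewrite exp_plus, (exp_Ropp (ln q)), exp_ln by lra. field; lra. }
  unfold Rdiv in Eu, Ev |- *.
  replace (l * / p * exp ((x - 1) * ln t + - t) + (1 - l) * / q * exp ((y - 1) * ln t + - t))
   with (l * (exp ((x - 1) * ln t + - t) * / p) + (1 - l) * (exp ((y - 1) * ln t + - t) * / q)) by ring.
  rewrite <- Eu, <- Ev. apply exp_convex; lra. }
set (g := fun t => C * (l / p * gf x t + (1 - l) / q * gf y t)).
assert (Hg : is_RInt_gen g (at_right 0) (Rbar_locally p_infty) C).
{ assert (H1 := is_RInt_gen_scal (Fa := at_right 0) (Fb := Rbar_locally p_infty) _ (l/p) _ Gx).
  assert (H2 := is_RInt_gen_scal (Fa := at_right 0) (Fb := Rbar_locally p_infty) _ ((1-l)/q) _ Gy).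
  assert (H3 := is_RInt_gen_plus (Fa := at_right 0) (Fb := Rbar_locally p_infty) _ _ _ _ H1 H2).
  assert (H4 := is_RInt_gen_scal (Fa := at_right 0) (Fb := Rbar_locally p_infty) _ C _ H3).
  match type of H4 with is_RInt_gen _ _ _ ?v => replace v with C in H4 end.
  exact H4.
  unfold scal, plus; simpl; unfold mult; simpl. field. lra. }
assert (Hle : norm (Gamma_pos s) <= C).
{ apply (RInt_gen_norm (V:=R_CompleteNormedModule) (Fa:=at_right 0) (Fb:=Rbar_locally p_infty) (gf s) g (Gamma_pos s) C).
  - apply Filter_prod with (fun a => 0 < a < 1) (fun b => 1 < b).
    apply at_right0_lt; lra. exists 1; intros; auto. intros a b Ha Hb; simpl; lra.
  - apply Filter_prod with (fun a => 0 < a < 1) (fun b => 1 < b).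
    apply at_right0_lt; lra. exists 1; intros; auto. intros a b Ha Hb z Hz; simpl in *.
    change (Rabs (gf s z) <= g z). rewrite Rabs_pos_eq by (apply Rlt_le, gf_pos).
    apply Hpt. lra.
  - exact Gs.
  - exact Hg. }
change (Rabs (Gamma_pos s) <= C) in Hle. rewrite Rabs_pos_eq in Hle by lra.
apply Rle_trans with (ln C). apply ln_le; auto. unfold C. rewrite ln_exp. lra.
Qed.

Definition G s := ln (Gamma_pos s).
Fixpoint ssum (f : nat -> R) (n : nat) : R :=
  match n with O => 0 | S m => ssum f m + f m end.

Lemma ssum_ext f g n : (forall k, (k < n)%nat -> f k = g k) -> ssum f n = ssum g n.
Proof. induction n; intros H; simpl; auto. rewrite IHn, H; auto. Qed.

Lemma ssum_plus f g n : ssum (fun k => f k + g k) n = ssum f n + ssum g n.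
Proof. induction n; simpl; [ring|rewrite IHn; ring]. Qed.

Lemma ssum_scal c f n : ssum (fun k => c * f k) n = c * ssum f n.
Proof. induction n; simpl; [ring|rewrite IHn; ring]. Qed.

Lemma ssum_le f g n : (forall k, (k < n)%nat -> f k <= g k) -> ssum f n <= ssum g n.
Proof. induction n; intros H; simpl. lra. apply Rplus_le_compat; auto. Qed.

Lemma Gpos s : 0 < s -> 0 < Gamma_pos s.
Proof. intros Hs; apply (Gamma_spec s Hs). Qed.

Lemma G_succ s : 0 < s -> G (s + 1) = G s + ln s.
Proof.
intros Hs. unfold G. rewrite Gamma_succ, ln_mult by (auto; apply Gpos; auto). ring.
Qed.

Lemma G_iter s m : 0 < s -> G (s + INR m) = G s + ssum (fun k => ln (s + INR k)) m.
Proof.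
intros Hs. induction m. simpl. rewrite Rplus_0_r. ring.
rewrite S_INR. replace (s + (INR m + 1)) with ((s + INR m) + 1) by ring.
rewrite G_succ. rewrite IHm. simpl. ring. generalize (pos_INR m); lra.
Qed.

Lemma G1 : G 1 = 0.
Proof. unfold G. rewrite Gamma1. apply ln_1. Qed.

Lemma ln_le_sub1 z : 0 < z -> ln z <= z - 1.
Proof. intros Hz. generalize (exp_ineq1_le (ln z)). rewrite exp_ln; lra. Qed.

Lemma E_bounds M x : 1 <= M -> 0 < x < 1 ->
  0 <= G (M + 1 + x) + G (M + 1 - x) - 2 * G (M + 1) <= x / M.
Proof.
intros HM Hx. split.
- assert (H := Holder (M + 1 + x) (M + 1 - x) (1/2)).
  replace (1 / 2 * (M + 1 + x) + (1 - 1 / 2) * (M + 1 - x)) with (M + 1) in H by field.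
  unfold G. assert (H' : ln (Gamma_pos (M + 1)) <=
    1 / 2 * ln (Gamma_pos (M + 1 + x)) + (1 - 1 / 2) * ln (Gamma_pos (M + 1 - x))).
  apply H; lra. lra.
- assert (H1 := Holder (M + 1) (M + 2) (1 - x)).
  replace ((1 - x) * (M + 1) + (1 - (1 - x)) * (M + 2)) with (M + 1 + x) in H1 by ring.
  assert (H2 := Holder M (M + 1) x).
  replace (x * M + (1 - x) * (M + 1)) with (M + 1 - x) in H2 by ring.
  assert (E1 : G (M + 2) = G (M + 1) + ln (M + 1)).
  { replace (M + 2) with ((M + 1) + 1) by ring. apply G_succ. lra. }
  assert (E2 : G (M + 1) = G M + ln M) by (apply G_succ; lra).
  fold (G (M + 1 + x)) (G (M+1)) (G (M+2)) in H1.
  fold (G (M + 1 - x)) (G (M+1)) (G M) in H2.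
  assert (H1' : G (M + 1 + x) <= (1 - x) * G (M + 1) + (1 - (1 - x)) * G (M + 2)) by (apply H1; lra).
  assert (H2' : G (M + 1 - x) <= x * G M + (1 - x) * G (M + 1)) by (apply H2; lra).
  assert (H3 : ln (M + 1) - ln M <= 1 / M).
  { rewrite <- ln_div by lra. generalize (ln_le_sub1 ((M + 1) / M)).
    replace ((M + 1) / M - 1) with (1 / M) by (field; lra). intros H; apply H.
    apply Rdiv_lt_0_compat; lra. }
  assert (H4 : x * (ln (M + 1) - ln M) <= x * (1 / M)) by (apply Rmult_le_compat_l; lra).
  replace (x / M) with (x * (1 / M)) by (field; lra). nra.
Qed.

Lemma F_decomp x N : 0 < x < 1 ->
  G (1 + x) + G (1 - x) =
  (G (INR N + 1 + x) + G (INR N + 1 - x) - 2 * G (INR N + 1))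
  + ssum (fun k => - ln (1 - x ^ 2 / (INR k + 1) ^ 2)) N.
Proof.
intros Hx.
replace (INR N + 1 + x) with ((1 + x) + INR N) by ring.
replace (INR N + 1 - x) with ((1 - x) + INR N) by ring.
replace (INR N + 1) with (1 + INR N) by ring.
rewrite !G_iter, G1 by lra.
assert (E : ssum (fun k => - ln (1 - x ^ 2 / (INR k + 1) ^ 2)) N =
  ssum (fun k => 2 * ln (1 + INR k) + (- 1) * ln (1 + x + INR k) + (- 1) * ln (1 - x + INR k)) N).
{ apply ssum_ext. intros k _. assert (Hk := pos_INR k).
  replace (1 - x ^ 2 / (INR k + 1) ^ 2) with ((1 + x + INR k) * (1 - x + INR k) / ((1 + INR k) * (1 + INR k))) by (field; lra).
  rewrite ln_div, !ln_mult; try ring; nra. }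
rewrite E, !ssum_plus, !ssum_scal. ring.
Qed.

Definition za (k : nat) := / (INR k + 1) ^ 2.

Lemma za_pos k : 0 < za k.
Proof. unfold za. apply Rinv_0_lt_compat, pow_lt. generalize (pos_INR k); lra. Qed.

Lemma ssum_za_bound N : ssum za (S N) <= 2 - 1 / (INR N + 1).
Proof.
induction N.
- simpl. unfold za. simpl. lra.
- change (ssum za (S (S N))) with (ssum za (S N) + za (S N)).
  rewrite S_INR. assert (Ez : za (S N) = / (INR N + 1 + 1) ^ 2) by (unfold za; rewrite S_INR; auto).
  rewrite Ez.
  assert (Hn := pos_INR N).
  assert (/ (INR N + 1 + 1) ^ 2 <= 1 / (INR N + 1) - 1 / (INR N + 1 + 1)).
  { replace (1 / (INR N + 1) - 1 / (INR N + 1 + 1)) with (/ ((INR N + 1) * (INR N + 1 + 1))) by (field; lra).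
    apply Rinv_le_contravar. nra. nra. }
  lra.
Qed.

Lemma ssum_za_le2 N : ssum za N <= 2.
Proof.
destruct N. simpl; lra.
generalize (ssum_za_bound N). assert (0 < 1 / (INR N + 1)).
apply Rdiv_lt_0_compat; generalize (pos_INR N); lra. lra.
Qed.

Lemma sum_n_ssum N : sum_n za N = ssum za (S N).
Proof.
induction N. rewrite sum_O. simpl. ring.
rewrite sum_Sn, IHN. reflexivity.
Qed.

Lemma ssum_incr N : ssum za N <= ssum za (S N).
Proof. simpl. generalize (za_pos N). lra. Qed.

Lemma ssum_mono N M : (N <= M)%nat -> ssum za N <= ssum za M.
Proof. induction 1. lra. generalize (ssum_incr m). lra. Qed.

Lemma zeta2_series : is_series za zeta2.
Proof.
assert (H : ex_series za).
{ destruct (ex_finite_lim_seq_incr (sum_n za) 2) as [l Hl].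
  intros n. rewrite !sum_n_ssum. apply ssum_incr.
  intros n. rewrite sum_n_ssum. apply ssum_za_le2.
  exists l. exact Hl. }
unfold zeta2. fold za. apply Series_correct. exact H.
Qed.

Lemma zeta2_tail eps : 0 < eps -> exists N0, forall N, (N0 <= N)%nat -> Rabs (ssum za N - zeta2) < eps.
Proof.
intros He. assert (H := zeta2_series). unfold is_series in H.
assert (H2 := proj1 (filterlim_locally (F := eventually) (sum_n za) zeta2) H (mkposreal eps He)).
destruct H2 as [N0 HN0]. exists (S N0). intros N HN.
destruct N. lia. rewrite <- sum_n_ssum.
assert (H3 := HN0 N ltac:(lia)). change (Rabs (sum_n za N - zeta2) < eps) in H3.
exact H3.
Qed.

Lemma ssum_le_zeta2 N : ssum za N <= zeta2.
Proof.
apply Rnot_lt_le. intros Hc.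
destruct (zeta2_tail (ssum za N - zeta2)) as [N0 HN0]. lra.
assert (H := HN0 (max N0 N) ltac:(lia)).
assert (ssum za N <= ssum za (max N0 N)) by (apply ssum_mono; lia).
apply Rabs_lt_between' in H. lra.
Qed.

Lemma zeta2_ge1 : 1 <= zeta2.
Proof. generalize (ssum_le_zeta2 1). simpl. unfold za. simpl. lra. Qed.

Lemma lnb1 y : 0 < y < 1 -> y <= - ln (1 - y) <= y / (1 - y).
Proof.
intros Hy. split.
- generalize (ln_le_sub1 (1 - y)). lra.
- rewrite <- ln_Rinv by lra. generalize (ln_le_sub1 (/ (1 - y))).
  replace (/ (1 - y) - 1) with (y / (1 - y)) by (field; lra). intros H; apply H.
  apply Rinv_0_lt_compat; lra.
Qed.

Lemma lnb2 y : 0 < y < 1 -> 0 <= - ln (1 - y) - y - y ^ 2 / 2 <= y ^ 3 / (1 - y).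
Proof.
intros Hy.
destruct (MVT_cor2 (fun t => - ln (1 - t) - t - t ^ 2 / 2) (fun t => t ^ 2 / (1 - t)) 0 y)
  as [c [Hc1 Hc2]]. lra.
{ intros c Hc. apply is_derive_Reals. auto_derive. lra. field. lra. }
cbv beta in Hc1. replace (1 - 0) with 1 in Hc1 by ring. rewrite ln_1 in Hc1.
replace (- ln (1 - y) - y - y ^ 2 / 2) with (c ^ 2 / (1 - c) * (y - 0)).
2:{ rewrite <- Hc1. field. }
split.
- apply Rmult_le_pos. apply Rdiv_le_0_compat; nra. lra.
- replace (y ^ 3 / (1 - y)) with (y ^ 2 / (1 - y) * y) by (field; lra).
  replace (y - 0) with y by ring. apply Rmult_le_compat_r. lra.
  unfold Rdiv. apply Rmult_le_compat. nra. apply Rlt_le, Rinv_0_lt_compat; lra.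
  apply pow_incr; lra. apply Rinv_le_contravar; lra.
Qed.

Definition T (x : R) (N : nat) := ssum (fun k => - ln (1 - x ^ 2 / (INR k + 1) ^ 2)) N.

Lemma T_bounds x N : 0 < x <= 1 / 2 ->
  x ^ 2 * ssum za N <= T x N <= x ^ 2 * ssum za N + 2 * x ^ 4 * ssum za N.
Proof.
intros Hx. unfold T. rewrite <- !ssum_scal, <- ssum_plus. split; apply ssum_le; intros k _.
- assert (Hk := za_pos k).
  assert (Hza : za k <= 1). { unfold za. rewrite <- Rinv_1. apply Rinv_le_contravar. lra.
    generalize (pos_INR k); intros; nra. }
  replace (x ^ 2 / (INR k + 1) ^ 2) with (x ^ 2 * za k) by (unfold za; field; generalize (pos_INR k); lra).
  assert (Hx2 : 0 < x ^ 2 <= 1 / 4) by (split; nra).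
  assert (Hy : 0 < x ^ 2 * za k < 1) by (split; nra).
  assert (H := lnb1 (x ^ 2 * za k) Hy). lra.
- assert (Hk := za_pos k).
  assert (Hza : za k <= 1). { unfold za. rewrite <- Rinv_1. apply Rinv_le_contravar. lra.
    generalize (pos_INR k); intros; nra. }
  replace (x ^ 2 / (INR k + 1) ^ 2) with (x ^ 2 * za k) by (unfold za; field; generalize (pos_INR k); lra).
  assert (Hx2 : 0 < x ^ 2 <= 1 / 4) by (split; nra).
  set (y := x ^ 2 * za k).
  assert (Hy : 0 < y <= 1 / 4) by (unfold y; nra).
  apply Rle_trans with (y / (1 - y)). apply (lnb1 y); lra.
  assert (y / (1 - y) <= y + 2 * y ^ 2).
  { apply Rmult_le_reg_r with (1 - y). lra. unfold Rdiv. rewrite Rmult_assoc, Rinv_l by lra. nra. }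
  assert (y ^ 2 <= x ^ 4 * za k) by (unfold y; nra).
  lra.
Qed.

Lemma F_lim eps : 0 < eps -> exists d, 0 < d /\ forall x, 0 < x < d ->
  Rabs ((G (1 + x) + G (1 - x)) / x ^ 2 - zeta2) < eps.
Proof.
intros He.
destruct (zeta2_tail (eps / 3)) as [N0 HN0]. lra.
exists (Rmin (1/2) (eps / 12)). split. apply Rmin_glb_lt; lra.
intros x Hx.
assert (Hx1 : x < 1/2) by (generalize (Rmin_l (1/2) (eps/12)); lra).
assert (Hx2 : x < eps / 12) by (generalize (Rmin_r (1/2) (eps/12)); lra).
destruct (INR_unbounded (3 / (eps * x) + 1)) as [n Hn].
set (N := max n N0).
assert (HN : INR n <= INR N) by (apply le_INR; unfold N; lia).
assert (Hpe : 0 < 3 / (eps * x)) by (apply Rdiv_lt_0_compat; nra).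
assert (HN1 : 1 <= INR N) by lra.
assert (HN2 : 3 / (eps * x) < INR N) by lra.
rewrite (F_decomp x N) by lra. fold (T x N).
set (E := G (INR N + 1 + x) + G (INR N + 1 - x) - 2 * G (INR N + 1)).
assert (HE := E_bounds (INR N) x HN1 ltac:(lra)). fold E in HE.
assert (HT := T_bounds x N ltac:(lra)).
assert (HS := HN0 N ltac:(unfold N; lia)).
assert (HS2 := ssum_le_zeta2 N).
assert (HS3 := ssum_za_le2 N).
assert (HS4 : 0 <= ssum za N). { destruct N. simpl; lra. generalize (ssum_mono 1 (S N) ltac:(lia)). simpl. generalize (za_pos 0). lra. }
apply Rabs_lt_between' in HS.
assert (Hx0 : 0 < x ^ 2) by nra.
assert (HE2 : E / x ^ 2 < eps / 3).
{ apply Rle_lt_trans with (x / INR N / x ^ 2).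
  unfold Rdiv. apply Rmult_le_compat_r. apply Rlt_le, Rinv_0_lt_compat; lra. unfold Rdiv in HE; lra.
  replace (x / INR N / x ^ 2) with (/ (INR N * x)) by (field; lra).
  apply Rmult_lt_reg_r with (INR N * x * (3 / eps)). apply Rmult_lt_0_compat. nra. apply Rdiv_lt_0_compat; lra.
  rewrite <- Rmult_assoc, Rinv_l by nra.
  replace (eps / 3 * (INR N * x * (3 / eps))) with (INR N * x) by (field; lra).
  replace (3 / (eps * x)) with (3 / eps / x) in HN2 by (field; lra).
  apply Rmult_lt_reg_r with (/ x). apply Rinv_0_lt_compat; lra.
  replace (INR N * x * / x) with (INR N) by (field; lra). lra. }
assert (HE3 : 0 <= E / x ^ 2) by (apply Rdiv_le_0_compat; lra).
assert (HT2 : ssum za N <= T x N / x ^ 2 <= ssum za N + 2 * x ^ 2 * ssum za N).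
{ split.
  - apply Rmult_le_reg_r with (x ^ 2). lra. unfold Rdiv. rewrite Rmult_assoc, Rinv_l by lra. lra.
  - apply Rmult_le_reg_r with (x ^ 2). lra. unfold Rdiv. rewrite Rmult_assoc, Rinv_l by lra. nra. }
replace ((E + T x N) / x ^ 2) with (E / x ^ 2 + T x N / x ^ 2) by (field; lra).
assert (2 * x ^ 2 * ssum za N <= 4 * x ^ 2) by nra.
assert (4 * x ^ 2 <= eps / 6) by nra.
apply Rabs_def1; lra.
Qed.

Lemma up_plus n x : 0 < x < 1 -> up (INR n + x) = Z.of_nat (S n).
Proof.
intros Hx. symmetry. apply tech_up; rewrite <- INR_IZR_INZ, S_INR; lra.
Qed.

Lemma up_minus n x : 0 < x < 1 -> up (INR n - x) = Z.of_nat n.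
Proof.
intros Hx. symmetry. apply tech_up; rewrite <- INR_IZR_INZ; lra.
Qed.

Lemma prod_peel c m : prod_f_R0 (fun k => c + INR k) (S m) = c * prod_f_R0 (fun k => (c + 1) + INR k) m.
Proof.
induction m.
- simpl. ring.
- change (prod_f_R0 (fun k => c + INR k) (S (S m))) with
    (prod_f_R0 (fun k => c + INR k) (S m) * (c + INR (S (S m)))).
  rewrite IHm.
  change (prod_f_R0 (fun k => c + 1 + INR k) (S m)) with
    (prod_f_R0 (fun k => c + 1 + INR k) m * (c + 1 + INR (S m))).
  rewrite !S_INR. ring.
Qed.

Definition Q n x := prod_f_R0 (fun k => - INR n - x + INR k) n.
Definition Rp n x := prod_f_R0 (fun k => - INR n + x + INR k) (n - 1).

Lemma Q_succ n x : Q (S n) x = (- INR n - 1 - x) * Q n x.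
Proof.
unfold Q. rewrite prod_peel. rewrite S_INR.
replace (- (INR n + 1) - x + 1) with (- INR n - x) by ring. f_equal. ring.
Qed.

Lemma Q_0 x : Q 0 x = - x.
Proof. unfold Q. simpl. ring. Qed.

Lemma Rp_succ m x : Rp (S (S m)) x = (- INR m - 2 + x) * Rp (S m) x.
Proof.
unfold Rp. replace (S (S m) - 1)%nat with (S m) by lia. replace (S m - 1)%nat with m by lia.
rewrite prod_peel. rewrite !S_INR.
replace (- (INR m + 1 + 1) + x + 1) with (- (INR m + 1) + x) by ring. f_equal. ring.
Qed.

Lemma Rp_1 x : Rp 1 x = x - 1.
Proof. unfold Rp. simpl. ring. Qed.

Lemma Gamma_negm n x : 0 < x < 1 -> Gamma (- INR n - x) = Gamma_pos (1 - x) / Q n x.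
Proof.
intros Hx. unfold Gamma. destruct (Rlt_dec 0 (- INR n - x)) as [H|H].
{ generalize (pos_INR n). lra. }
unfold Gamma_shift. replace (- (- INR n - x)) with (INR n + x) by ring.
rewrite up_plus, Nat2Z.id by auto. rewrite S_INR. replace (S n - 1)%nat with n by lia.
f_equal. f_equal. ring.
Qed.

Lemma Gamma_negp n x : 0 < x < 1 -> Gamma (- INR (S n) + x) = Gamma_pos x / Rp (S n) x.
Proof.
intros Hx. unfold Gamma. destruct (Rlt_dec 0 (- INR (S n) + x)) as [H|H].
{ rewrite S_INR in H. generalize (pos_INR n). lra. }
unfold Gamma_shift. replace (- (- INR (S n) + x)) with (INR (S n) - x) by ring.
rewrite up_minus, Nat2Z.id by auto.
f_equal. f_equal. ring.
Qed.

Lemma Gamma_0p x : 0 < x < 1 -> Gamma (- INR 0 + x) = Gamma_pos x.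
Proof.
intros Hx. unfold Gamma. simpl INR. replace (-0 + x) with x by ring.
destruct (Rlt_dec 0 x) as [H|H]; [auto|lra].
Qed.

Lemma Q_abs_pos n x : 0 < x < 1 -> 0 < Rabs (Q n x).
Proof.
intros Hx. induction n. rewrite Q_0, Rabs_Ropp, Rabs_pos_eq; lra.
rewrite Q_succ, Rabs_mult. apply Rmult_lt_0_compat; auto.
apply Rabs_pos_lt. generalize (pos_INR n). lra.
Qed.

Lemma Rp_abs_pos n x : 0 < x < 1 -> 0 < Rabs (Rp (S n) x).
Proof.
intros Hx. induction n. rewrite Rp_1. apply Rabs_pos_lt. lra.
rewrite Rp_succ, Rabs_mult. apply Rmult_lt_0_compat; auto.
apply Rabs_pos_lt. generalize (pos_INR n). lra.
Qed.

Lemma LQ_succ n x : 0 < x < 1 -> ln (Rabs (Q (S n) x)) = ln (INR n + 1 + x) + ln (Rabs (Q n x)).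
Proof.
intros Hx. rewrite Q_succ, Rabs_mult, ln_mult. f_equal. f_equal.
rewrite Rabs_left. ring. generalize (pos_INR n); lra.
apply Rabs_pos_lt. generalize (pos_INR n); lra. apply Q_abs_pos; auto.
Qed.

Lemma LR_succ n x : 0 < x < 1 -> ln (Rabs (Rp (S (S n)) x)) = ln (INR n + 2 - x) + ln (Rabs (Rp (S n) x)).
Proof.
intros Hx. rewrite Rp_succ, Rabs_mult, ln_mult. f_equal. f_equal.
rewrite Rabs_left. ring. generalize (pos_INR n); lra.
apply Rabs_pos_lt. generalize (pos_INR n); lra. apply Rp_abs_pos; auto.
Qed.

Definition LR n x := match n with O => 0 | S _ => ln (Rabs (Rp n x)) end.

Lemma LR_succ' n x : 0 < x < 1 -> LR (S n) x = ln (INR n + 1 - x) + LR n x.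
Proof.
intros Hx. destruct n. simpl LR. rewrite Rp_1, Rabs_left by lra. simpl. rewrite Rplus_0_r. f_equal. ring.
unfold LR. rewrite LR_succ by auto. f_equal. f_equal. rewrite S_INR. ring.
Qed.

Lemma ln_abs_div a b : 0 < a -> b <> 0 -> ln (Rabs (a / b)) = ln a - ln (Rabs b).
Proof.
intros Ha Hb. rewrite Rabs_div by auto. rewrite Rabs_pos_eq by lra.
rewrite ln_div; auto. apply Rabs_pos_lt; auto.
Qed.

Lemma A_form n x : 0 < x < 1 ->
  A n x = 2 * ln (INR (fact n)) + 2 * ln x + G (1 - x) + G x - ln (Rabs (Q n x)) - LR n x
          - x ^ 2 * sum_n_m (fun k => / INR k ^ 2) 1 n.
Proof.
intros Hx. unfold A.
rewrite ln_mult by (auto using INR_fact_lt_0; lra).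
rewrite Gamma_negm by auto.
rewrite ln_abs_div. 2: apply Gpos; lra.
2:{ intros H0. generalize (Q_abs_pos n x Hx). rewrite H0, Rabs_R0. lra. }
destruct n.
- rewrite Gamma_0p by auto. unfold LR. rewrite (Rabs_pos_eq (Gamma_pos x)) by (apply Rlt_le, Gpos; lra).
  unfold G. ring.
- rewrite Gamma_negp by auto. rewrite ln_abs_div. 2: apply Gpos; lra.
  2:{ intros H0. generalize (Rp_abs_pos n x Hx). rewrite H0, Rabs_R0. lra. }
  unfold LR, G. ring.
Qed.

Definition Dn (n : nat) (x : R) := - ln (1 - x ^ 2 / (INR n + 1) ^ 2) - x ^ 2 / (INR n + 1) ^ 2.

Lemma A0 x : 0 < x < 1 -> A 0 x = G (1 + x) + G (1 - x).
Proof.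
intros Hx. rewrite A_form by auto. rewrite Q_0, Rabs_Ropp, Rabs_pos_eq by lra.
simpl fact. simpl INR. rewrite ln_1. rewrite sum_n_m_zero by lia. simpl LR.
replace (1 + x) with (x + 1) by ring. rewrite G_succ by lra.
change (@zero R_AbelianMonoid) with 0. ring.
Qed.

Lemma A_step n x : 0 < x < 1 -> A (S n) x = A n x + Dn n x.
Proof.
intros Hx. rewrite !A_form by auto.
rewrite LQ_succ, LR_succ' by auto.
rewrite sum_n_Sm by lia.
rewrite fact_simpl, mult_INR, ln_mult by first [apply INR_fact_lt_0 | apply lt_0_INR; lia].
unfold Dn. assert (Hn := pos_INR n).
replace (1 - x ^ 2 / (INR n + 1) ^ 2) with ((INR n + 1 + x) * (INR n + 1 - x) / ((INR n + 1) * (INR n + 1))) by (field; lra).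
rewrite ln_div, !ln_mult; try nra.
rewrite S_INR. change (plus ?a ?b) with (a + b). unfold Rdiv. ring.
Qed.


Lemma A_sum n x : 0 < x < 1 -> A n x = G (1 + x) + G (1 - x) + ssum (fun j => Dn j x) n.
Proof.
intros Hx. induction n. rewrite A0 by auto. simpl. ring.
rewrite A_step, IHn by auto. simpl. ring.
Qed.

Lemma Dn_bounds n x : 0 < x <= 1 / 2 ->
  0 <= Dn n x <= 2 * x ^ 4 /\
  Rabs (Dn n x / x ^ 4 - / (2 * (INR n + 1) ^ 4)) <= 2 * x ^ 2.
Proof.
intros Hx. assert (Hn := pos_INR n).
set (y := x ^ 2 / (INR n + 1) ^ 2).
assert (Hp : 1 <= (INR n + 1) ^ 2) by nra.
assert (Hx2 : 0 < x ^ 2 <= 1 / 4) by (split; nra).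
assert (Hy1 : 0 < y <= x ^ 2).
{ unfold y. split. apply Rdiv_lt_0_compat; nra.
  apply Rmult_le_reg_r with ((INR n + 1) ^ 2). nra. unfold Rdiv. rewrite Rmult_assoc, Rinv_l by nra. nra. }
assert (Hy : 0 < y < 1) by lra.
assert (H2 := lnb2 y Hy).
assert (H1 := lnb1 y Hy).
unfold Dn. fold y.
assert (Hy3 : y ^ 3 / (1 - y) <= 2 * y ^ 3).
{ apply Rmult_le_reg_r with (1 - y). lra. unfold Rdiv. rewrite Rmult_assoc, Rinv_l by lra. nra. }
assert (Hyy : y ^ 2 <= x ^ 4) by nra.
assert (Hyyy : y ^ 3 <= x ^ 6) by nra.
split. split. nra.
- assert (y / (1 - y) <= y + 2 * y ^ 2).
  { apply Rmult_le_reg_r with (1 - y). lra. unfold Rdiv. rewrite Rmult_assoc, Rinv_l by lra. nra. }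
  nra.
- assert (Ey : y ^ 2 / 2 / x ^ 4 = / (2 * (INR n + 1) ^ 4)) by (unfold y; field; lra).
  assert (Hx4 : 0 < x ^ 4) by nra.
  replace ((- ln (1 - y) - y) / x ^ 4 - / (2 * (INR n + 1) ^ 4))
    with ((- ln (1 - y) - y - y ^ 2 / 2) / x ^ 4) by (rewrite <- Ey; field; lra).
  rewrite Rabs_pos_eq by (apply Rdiv_le_0_compat; lra).
  apply Rmult_le_reg_r with (x ^ 4). auto. unfold Rdiv. rewrite Rmult_assoc, Rinv_l by lra.
  replace (2 * x ^ 2 * x ^ 4) with (2 * x ^ 6) by ring. lra.
Qed.

Lemma An_lim n eps : 0 < eps -> exists d, 0 < d /\ forall x, 0 < x < d ->
  Rabs (A n x / x ^ 2 - zeta2) < eps.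
Proof.
intros He. destruct (F_lim (eps / 2)) as [d [Hd HF]]. lra.
exists (Rmin (Rmin d (1/2)) (eps / (4 * (INR n + 1)))). split.
{ assert (Hn := pos_INR n). repeat apply Rmin_glb_lt; try lra. apply Rdiv_lt_0_compat; lra. }
intros x Hx.
assert (Hx1 : x < d) by (generalize (Rmin_l (Rmin d (1/2)) (eps / (4 * (INR n + 1)))) (Rmin_l d (1/2)); lra).
assert (Hx2 : x < 1/2) by (generalize (Rmin_l (Rmin d (1/2)) (eps / (4 * (INR n + 1)))) (Rmin_r d (1/2)); lra).
assert (Hx3 : x < eps / (4 * (INR n + 1))) by (generalize (Rmin_r (Rmin d (1/2)) (eps / (4 * (INR n + 1)))); lra).
assert (Hn := pos_INR n).
rewrite A_sum by lra.
assert (HSm : forall m, 0 <= ssum (fun j => Dn j x) m <= INR m * (2 * x ^ 4)).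
{ induction m. simpl. lra. simpl ssum. rewrite S_INR.
  assert (H := proj1 (Dn_bounds m x ltac:(lra))). lra. }
assert (HS := HSm n).
assert (Hx0 : 0 < x ^ 2) by nra.
assert (HS2 : 0 <= ssum (fun j => Dn j x) n / x ^ 2 <= INR n * (2 * x ^ 2)).
{ split. apply Rdiv_le_0_compat; lra.
  apply Rmult_le_reg_r with (x ^ 2). lra. unfold Rdiv. rewrite Rmult_assoc, Rinv_l by lra. nra. }
assert (HF2 := HF x ltac:(lra)).
assert (INR n * (2 * x ^ 2) < eps / 2).
{ assert (x * (4 * (INR n + 1)) < eps).
  { apply Rmult_lt_reg_r with (/ (4 * (INR n + 1))). apply Rinv_0_lt_compat; lra.
    rewrite Rmult_assoc, Rinv_r by lra. lra. }
  nra. }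
replace ((G (1 + x) + G (1 - x) + ssum (fun j => Dn j x) n) / x ^ 2)
  with ((G (1 + x) + G (1 - x)) / x ^ 2 + ssum (fun j => Dn j x) n / x ^ 2) by (field; lra).
apply Rabs_lt_between' in HF2. apply Rabs_def1; lra.
Qed.

Lemma ev_right (P : R -> Prop) d : 0 < d -> (forall x, 0 < x < d -> P x) -> at_right 0 P.
Proof.
intros Hd H. exists (mkposreal d Hd). intros y Hy Hy0. apply H. split; auto.
change (Rabs (y - 0) < d) in Hy. apply Rabs_lt_between' in Hy. lra.
Qed.

Lemma eps_fl f L : (forall eps, 0 < eps -> exists d, 0 < d /\ forall x, 0 < x < d -> Rabs (f x - L) < eps) ->
  filterlim f (at_right 0) (locally L).
Proof.
intros H. apply filterlim_locally. intros [eps He].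
destruct (H eps He) as [d [Hd Hx]]. apply ev_right with d; auto.
Qed.

Lemma fl_mult f g a b : filterlim f (at_right 0) (locally a) -> filterlim g (at_right 0) (locally b) ->
  filterlim (fun x => f x * g x) (at_right 0) (locally (a * b)).
Proof.
intros Hf Hg. apply (filterlim_comp_2 f g Rmult Hf Hg).
exact (filterlim_mult (K := R_AbsRing) a b).
Qed.

Lemma fl_inv g b : b <> 0 -> filterlim g (at_right 0) (locally b) ->
  filterlim (fun x => / g x) (at_right 0) (locally (/ b)).
Proof.
intros Hb Hg. apply (filterlim_comp _ _ _ g Rinv (at_right 0) (locally b) (locally (/ b)) Hg).
assert (H := filterlim_Rbar_inv (Finite b)). simpl in H. apply H.
intros E. injection E. auto.
Qed.

Lemma fl_opp g b : filterlim g (at_right 0) (locally b) ->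
  filterlim (fun x => - g x) (at_right 0) (locally (- b)).
Proof.
intros Hg. replace (- b) with ((-1) * b) by ring.
apply (filterlim_ext (fun x => (-1) * g x)). intros; ring.
apply fl_mult; auto. apply filterlim_const.
Qed.

Lemma fl_plus f g a b : filterlim f (at_right 0) (locally a) -> filterlim g (at_right 0) (locally b) ->
  filterlim (fun x => f x + g x) (at_right 0) (locally (a + b)).
Proof.
intros Hf Hg. apply (filterlim_comp_2 f g Rplus Hf Hg).
exact (filterlim_plus (V := R_NormedModule) a b).
Qed.

Lemma fl_minus f g a b : filterlim f (at_right 0) (locally a) -> filterlim g (at_right 0) (locally b) ->
  filterlim (fun x => f x - g x) (at_right 0) (locally (a - b)).
Proof.
intros Hf Hg. apply (filterlim_ext (fun x => f x + - g x)). intros; ring.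
apply fl_plus; auto. apply fl_opp; auto.
Qed.

Lemma lnb1' y : 0 <= y < 1 -> y <= - ln (1 - y) <= y / (1 - y).
Proof.
intros Hy. destruct (Req_dec y 0) as [->|H].
rewrite Rminus_0_r, ln_1. lra. apply lnb1; lra.
Qed.

Theorem mainTheorem6 : forall n : nat,
  filterlim (fun x => / x ^ 2 * ln (A n x / A (S n) x)) (at_right 0)
    (locally (- / (2 * (INR n + 1) ^ 4 * zeta2))).
Proof.
intros n.
set (Z := zeta2). assert (HZ : 1 <= Z) by apply zeta2_ge1.
set (c := / (2 * (INR n + 1) ^ 4)).
assert (Hn := pos_INR n).
assert (Hc : 0 < c) by (unfold c; apply Rinv_0_lt_compat; nra).
set (a := fun x => A (S n) x / x ^ 2).
set (b := fun x => Dn n x / x ^ 4).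
assert (Ha : filterlim a (at_right 0) (locally Z)).
{ apply eps_fl. intros eps He. apply (An_lim (S n) eps He). }
assert (Hb : filterlim b (at_right 0) (locally c)).
{ apply eps_fl. intros eps He. exists (Rmin (1/2) (eps / 4)). split.
  apply Rmin_glb_lt; lra. intros x Hx.
  assert (x < 1/2) by (generalize (Rmin_l (1/2) (eps/4)); lra).
  assert (x < eps/4) by (generalize (Rmin_r (1/2) (eps/4)); lra).
  assert (HH := proj2 (Dn_bounds n x ltac:(lra))). unfold b. fold c in HH.
  assert (2 * x ^ 2 < eps) by nra. lra. }
set (v := fun x => b x * / a x).
assert (Hv : filterlim v (at_right 0) (locally (c * / Z))).
{ apply fl_mult; auto. apply fl_inv; auto. lra. }
set (u := fun x => x ^ 2 * v x).
assert (Hx2 : filterlim (fun x : R => x ^ 2) (at_right 0) (locally 0)).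
{ apply eps_fl. intros eps He. exists (Rmin 1 eps). split. apply Rmin_glb_lt; lra.
  intros x Hx. assert (x < 1) by (generalize (Rmin_l 1 eps); lra).
  assert (x < eps) by (generalize (Rmin_r 1 eps); lra).
  rewrite Rminus_0_r, Rabs_pos_eq by nra. nra. }
assert (Hu : filterlim u (at_right 0) (locally 0)).
{ assert (H0 := fl_mult _ _ _ _ Hx2 Hv). rewrite Rmult_0_l in H0. exact H0. }
assert (Hlo : filterlim (fun x => - v x * / (1 - u x)) (at_right 0) (locally (- (c * / Z) * / (1 - 0)))).
{ apply fl_mult. apply fl_opp; auto. apply fl_inv. lra. apply fl_minus; auto. apply filterlim_const. }
replace (- (c * / Z) * / (1 - 0)) with (- / (2 * (INR n + 1) ^ 4 * Z)) in Hlo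
  by (unfold c; field; repeat split; try lra; nra).
assert (Hhi : filterlim (fun x => - v x) (at_right 0) (locally (- / (2 * (INR n + 1) ^ 4 * Z)))).
{ replace (- / (2 * (INR n + 1) ^ 4 * Z)) with (- (c * / Z)) by (unfold c; field; repeat split; try lra; nra).
  apply fl_opp; auto. }
assert (Hev : at_right 0 (fun x => - v x * / (1 - u x) <= / x ^ 2 * ln (A n x / A (S n) x) <= - v x)).
{ destruct (An_lim (S n) (Z / 2)) as [d [Hd HA]]. lra.
  assert (Hu2 := proj1 (filterlim_locally u 0) Hu (mkposreal (1/2) ltac:(lra))). simpl in Hu2.
  assert (Hd2 : at_right 0 (fun x => 0 < x < Rmin d (1/2))).
  { apply ev_right with (Rmin d (1/2)). apply Rmin_glb_lt; lra. auto. }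
  generalize (filter_and _ _ Hu2 Hd2). apply filter_imp. intros x [Hux Hx].
  change (Rabs (u x - 0) < 1 / 2) in Hux. rewrite Rminus_0_r in Hux. apply Rabs_def2 in Hux.
  assert (x < d) by (generalize (Rmin_l d (1/2)); lra).
  assert (x < 1/2) by (generalize (Rmin_r d (1/2)); lra).
  assert (HAx := HA x ltac:(lra)). apply Rabs_lt_between' in HAx. change zeta2 with Z in HAx.
  assert (Hx2p : 0 < x ^ 2) by nra.
  assert (Hx4p : 0 < x ^ 4) by nra.
  assert (HAp : 0 < A (S n) x).
  { assert (0 < A (S n) x / x ^ 2) by lra.
    replace (A (S n) x) with (A (S n) x / x ^ 2 * x ^ 2) by (field; lra). nra. }
  assert (HD := proj1 (Dn_bounds n x ltac:(lra))).
  assert (Eu : u x = Dn n x / A (S n) x).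
  { unfold u, v, b, a. field. repeat split; lra. }
  assert (Ev : v x = u x / x ^ 2). { unfold u. field. lra. }
  assert (Hu0 : 0 <= u x) by (rewrite Eu; apply Rdiv_le_0_compat; lra).
  assert (Eq : A n x / A (S n) x = 1 - u x).
  { rewrite Eu. rewrite (A_step n x) by lra. field. rewrite <- (A_step n x) by lra. lra. }
  rewrite Eq. assert (Hl := lnb1' (u x) ltac:(lra)).
  rewrite Ev. split.
  - replace (- (u x / x ^ 2) * / (1 - u x)) with (/ x ^ 2 * (- (u x / (1 - u x)))) by (field; split; [lra|lra]).
    apply Rmult_le_compat_l. apply Rlt_le, Rinv_0_lt_compat; lra. lra.
  - replace (- (u x / x ^ 2)) with (/ x ^ 2 * (- u x)) by (field; lra).
    apply Rmult_le_compat_l. apply Rlt_le, Rinv_0_lt_compat; lra. lra. }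
exact (filterlim_le_le (F := at_right 0) _ _ _ (Finite _) Hev Hlo Hhi).
Qed.
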